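(* Let $G$ be a finite group, let $R$ be a Cayley subset of $G$, and suppose $\Gamma:=\mathrm{Cay}(G,R)$ is a GRR. Then either $|\Gamma[R]_I|\le 1$ or $|\Gamma^c[R^c]_I|\le 1$. Moreover, when $|G|>2$, either $G=\langle R\setminus\Gamma[R]_I\rangle$ and $|\Gamma[R]_I|\le 1$, or $G=\langle R^c\setminus\Gamma^c[R^c]_I\rangle$ and $|\Gamma^c[R^c]_I|\le 1$.
   Context: A Cayley subset of $G$ is a subset $R$ with $R=R^{-1}$ and $1\notin R$. $\mathrm{Cay}(G,R)$ is the graph with vertex set $G$ and edges $\{g,rg\}$ for $g\in G$, $r\in R$. It is a GRR if its automorphism group equals the group of right multiplications by elements of $G$ (equivalently, is isomorphic to $G$). $R^c:=G\setminus(\{1\}\cup R)$ and $\Gamma^c=\mathrm{Cay}(G,R^c)$ is the complement of $\Gamma$. For a graph $\Sigma$ and a vertex subset $X$, $\Sigma[X]_I$ denotes the set of isolated vertices of the subgraph of $\Sigma$ induced on $X$, i.e. the $v\in X$ with no neighbour in $X$. *)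

(* Defs.v *)
From mathcomp Require Import all_boot all_fingroup.
Set Implicit Arguments. Unset Strict Implicit. Unset Printing Implicit Defensive.
Local Open Scope group_scope.

Section Cayley.
Variable gT : finGroupType.

Definition cayley_subset (R : {set gT}) : Prop :=
  R^-1 = R /\ (1 : gT) \notin R.

(* adjacency in Cay(G,R): edges {g, r g}, i.e. x ~ y iff y x^-1 \in R *)
Definition cay_adj (R : {set gT}) (x y : gT) : bool := (y * x^-1) \in R.

Definition cay_aut (R : {set gT}) (s : {perm gT}) : Prop :=
  forall x y, cay_adj R (s x) (s y) = cay_adj R x y.

Definition is_GRR (R : {set gT}) : Prop :=
  forall s : {perm gT}, cay_aut R s <-> exists h : gT, forall x, s x = x * h.

Definition cay_compl (R : {set gT}) : {set gT} := ~: ((1 : gT) |: R).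

(* Sigma[X]_I for Sigma = Cay(G,R): isolated vertices of induced subgraph on X *)
Definition isolated (R X : {set gT}) : {set gT} :=
  [set v in X | [forall w in X, ~~ cay_adj R v w]].
End Cayley.

(* Main.v *)
Require Import Defs.
From mathcomp Require Import all_boot all_fingroup.
Local Open Scope group_scope.

Section Aux.
Variable gT : finGroupType.
Implicit Types (R : {set gT}) (x y z : gT).

Definition grr_fwd R :=
  forall s : {perm gT}, cay_aut R s -> exists h : gT, forall x, s x = x * h.

Lemma adj_sym R x y : cayley_subset R -> cay_adj R x y = cay_adj R y x.
Proof. by case=> HR _; rewrite /cay_adj -{1}HR mem_invg invMg invgK. Qed.

Lemma adj_irr R x : 1 \notin R -> cay_adj R x x = false.
Proof. by move=> R1; rewrite /cay_adj mulgV (negbTE R1). Qed.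

Lemma card_nbr R x : #|[set y | cay_adj R x y]| = #|R|.
Proof.
have -> : [set y | cay_adj R x y] = R :* x by apply/setP=> y; rewrite inE mem_rcoset.
exact: card_rcoset.
Qed.

Lemma rev_step R (t : {perm gT}) x y : (forall z, t (t z) = z) ->
  (forall z, cay_adj R x z -> cay_adj R y (t z)) ->
  forall z, cay_adj R y z -> cay_adj R x (t z).
Proof.
move=> tK H z yz.
have sub : t @: [set z | cay_adj R x z] \subset [set z | cay_adj R y z].
  by apply/subsetP=> a /imsetP[w]; rewrite inE => /H ? ->; rewrite inE.
have /eqP E : t @: [set z | cay_adj R x z] == [set z | cay_adj R y z].
  rewrite eqEcard sub /=.
  rewrite card_imset; last exact: perm_inj.
  by rewrite !card_nbr.
have : z \in t @: [set z | cay_adj R x z] by rewrite E inE.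
by case/imsetP=> w; rewrite inE => xw ->; rewrite tK.
Qed.

Lemma twins_aut R x y : cayley_subset R ->
  (forall z, z != x -> z != y -> cay_adj R x z = cay_adj R y z) ->
  cay_aut R (tperm x y).
Proof.
move=> HR H a b.
have H' : forall z, z != x -> z != y -> cay_adj R z x = cay_adj R z y.
  by move=> z zx zy; rewrite adj_sym // H // adj_sym.
have I1 : forall c d, cay_adj R c c = cay_adj R d d by move=> c d; rewrite /cay_adj !mulgV.
case: (tpermP x y a) => [->|->|/eqP ax /eqP ay];
case: (tpermP x y b) => [->|->|/eqP bx /eqP by_] //.
all: first [exact: I1 | exact: adj_sym | by rewrite H | by rewrite H' | done].
Qed.

Lemma small_card (s : seq gT) : (forall z, z \in s) -> #|gT| <= size s.
Proof.
move=> Hs; apply: leq_trans (card_size s); apply: subset_leq_card.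
by apply/subsetP => z _; exact: Hs.
Qed.


Lemma main_contra R u v : cayley_subset R -> grr_fwd R ->
  u \in isolated R R -> v \in isolated (cay_compl R) (cay_compl R) ->
  cay_adj R u v -> False.
Proof.
move=> HR G Hu Hv uv.
have R1 : 1 \notin R by case: HR.
move: Hu; rewrite inE => /andP[uR /forall_inP uI].
move: Hv; rewrite inE => /andP[vc /forall_inP vJ].
have vR : v \notin R by move: vc; rewrite !inE negb_or => /andP[].
have v1 : v != 1 by move: vc; rewrite !inE negb_or => /andP[].
have u1 : u != 1 by apply: contraNneq R1 => <-.
have uv1 : u != v by apply: contraNneq vR => <-.
set w := u * v.
have w1 : w != 1.
  apply/negP => /eqP wE; move: vR; have -> : v = u^-1 by rewrite -(mulKg u v) -/w wE mulg1.
  by case: HR => HR _; rewrite -mem_invg HR uR.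
have wu : w != u.
  apply/eqP => E; have /mulgI ve : u * v = u * 1 by rewrite mulg1.
  by rewrite ve eqxx in v1.
have wv : w != v.
  apply/eqP => E; have /mulIg ue : u * v = 1 * v by rewrite mul1g.
  by rewrite ue eqxx in u1.
have sym : forall x y, cay_adj R x y = cay_adj R y x := fun x y => adj_sym R x y HR.
have irr : forall x, cay_adj R x x = false := fun x => adj_irr R x R1.
have adj1 : forall z, cay_adj R 1 z = (z \in R) by move=> z; rewrite /cay_adj invg1 mulg1.
have F1 : forall z, cay_adj R 1 z -> cay_adj R u z -> False.
  by move=> z; rewrite adj1 => /uI /negP.
have F2 : forall z, cay_adj R v z -> cay_adj R w z -> False.
  move=> z; rewrite {1}/cay_adj => /uI /negP H; rewrite /cay_adj /w invMg mulgA => H'.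
  exact: H.
have F3 : forall z, z != 1 -> z != v -> cay_adj R 1 z || cay_adj R v z.
  move=> z z1 zv; rewrite adj1; case zR: (z \in R) => //=.
  have : z \in cay_compl R by rewrite !inE (negbTE z1) zR.
  move/vJ; rewrite /cay_adj !inE.
  move/negPn => /orP[|//].
  by rewrite -eq_mulgV1 (negbTE zv).
have a1u : cay_adj R 1 u by rewrite adj1.
have avw : cay_adj R v w by rewrite /cay_adj /w mulgK.
have nuw : cay_adj R u w = false.
  by apply/negP => uw; apply: (F2 u); rewrite sym.
pose t := tperm 1 w * tperm u v.
have t1 : t 1 = w by rewrite permM tpermL tpermD // eq_sym.
have tw : t w = 1 by rewrite permM tpermR tpermD // eq_sym.
have tu : t u = v by rewrite permM (tpermD (_ : 1 != u)) ?tpermL // eq_sym.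
have tv : t v = u by rewrite permM (tpermD (_ : 1 != v)) ?tpermR // eq_sym.
have to : forall z, z != 1 -> z != w -> z != u -> z != v -> t z = z.
  by move=> z ????; rewrite permM !tpermD // eq_sym.
pose S := fun z => [|| z == 1, z == w, z == u | z == v].
have toS : forall z, S z = false -> t z = z.
  by move=> z /negbT; rewrite /S !negb_or => /and4P[? ? ? ?]; rewrite to.
have tK : forall z, t (t z) = z.
  move=> z; case Sz: (S z); last by rewrite !toS.
  by case/or4P: Sz => /eqP ->; rewrite ?t1 ?tw ?tu ?tv.
have St1 : forall z, cay_adj R w z -> cay_adj R 1 (t z).
  move=> z; case: (eqVneq z 1) => [->|z1] wz; first by rewrite t1 sym.
  case: (eqVneq z w) => [zw|zw]; first by rewrite zw irr in wz.
  case: (eqVneq z u) => [zu|zu]; first by rewrite zu sym nuw in wz.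
  case: (eqVneq z v) => [zv|zv]; first by rewrite zv tv adj1.
  rewrite to //; case/orP: (F3 z z1 zv) => // vz; by case: (F2 z vz wz).
have St2 : forall z, cay_adj R u z -> cay_adj R v (t z).
  move=> z; case: (eqVneq z 1) => [->|z1] uz; first by rewrite t1.
  case: (eqVneq z w) => [zw|zw]; first by rewrite zw nuw in uz.
  case: (eqVneq z u) => [zu|zu]; first by rewrite zu irr in uz.
  case: (eqVneq z v) => [zv|zv]; first by rewrite zv tv sym.
  rewrite to //; case/orP: (F3 z z1 zv) => // z1'; by case: (F1 z z1' uz).
have St3 := rev_step R t w 1 tK St1.
have St4 := rev_step R t u v tK St2.
have StS : forall x, S x -> forall z, cay_adj R x z -> cay_adj R (t x) (t z).
  move=> x /or4P[] /eqP ->; rewrite ?t1 ?tw ?tu ?tv; [exact St3|exact St1|exact St2|exact St4].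
have Fwd : forall x z, cay_adj R x z -> cay_adj R (t x) (t z).
  move=> x z xz; case Sx: (S x); first exact: StS.
  case Sz: (S z); last by rewrite !toS.
  by rewrite sym; apply: StS; rewrite // sym.
have aut : cay_aut R t.
  by move=> x y; apply/idP/idP => [/Fwd|/Fwd //]; rewrite !tK.
have [h Hh] := G t aut.
have hw : h = w by have := Hh 1; rewrite t1 mul1g.
case: (pickP (fun z => ~~ S z)) => [z Sz | allS].
  have := Hh z; rewrite toS ?hw; last by apply: negbTE.
  have -> : z = z * 1 by rewrite mulg1.
  rewrite -mulgA mul1g => /mulgI w1'; by rewrite -w1' eqxx in w1.
have allS' : forall z, S z by move=> z; have := allS z; rewrite /= => /negbFE.
have a1w : cay_adj R 1 w.
  apply/negP => n1w.
  have c1 : #|[set z | cay_adj R 1 z]| <= 1.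
    apply: leq_trans (_ : #|[set u]| <= 1); last by rewrite cards1.
    apply: subset_leq_card; apply/subsetP => z; rewrite !inE => z1.
    case/or4P: (allS' z) => /eqP E; rewrite E in z1.
    - by rewrite irr in z1.
    - by rewrite z1 in n1w.
    - by rewrite E.
    - by rewrite adj1 (negbTE vR) in z1.
  have c2 : 2 <= #|[set z | cay_adj R u z]|.
    have <- : #|[set 1; v]| = 2 by rewrite cards2 eq_sym v1.
    apply: subset_leq_card; apply/subsetP => z; rewrite !inE => /orP[] /eqP ->.
    - by rewrite sym.
    - exact: uv.
  rewrite !card_nbr in c1 c2.
  by have := leq_trans c2 c1.
have tw_aut : cay_aut R (tperm u w).
  apply: twins_aut => // z zu zw.
  case/or4P: (allS' z) => /eqP E; rewrite E in zu zw *.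
  - by rewrite (sym u) (sym w) a1u a1w.
  - by rewrite eqxx in zw.
  - by rewrite eqxx in zu.
  - by rewrite uv sym.
have [h' Hh'] := G _ tw_aut.
have t1' : tperm u w 1 = 1 by rewrite tpermD // eq_sym.
have h1 : h' = 1 by have := Hh' 1; rewrite t1' mul1g => /esym.
have := Hh' u; rewrite tpermL h1 mulg1 => E.
by rewrite E eqxx in wu.
Qed.

Lemma compl_cs R : cayley_subset R -> cayley_subset (cay_compl R).
Proof.
case=> HR R1; split; last by rewrite !inE eqxx.
apply/setP => x; rewrite mem_invg !inE invg_eq1.
by rewrite -mem_invg HR.
Qed.

Lemma compl_compl R : 1 \notin R -> cay_compl (cay_compl R) = R.
Proof.
move=> R1; apply/setP => x; rewrite !inE.
by case: eqP => [->|_] /=; rewrite ?negbK ?(negbTE R1).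
Qed.

Lemma compl_grr R : grr_fwd R -> grr_fwd (cay_compl R).
Proof.
move=> G s Hs; apply: G => x y.
have := Hs x y; rewrite /cay_adj !inE.
case: (eqVneq x y) => [->|xy]; first by rewrite !mulgV.
have sxy : s x != s y by apply: contra_neq xy; apply: perm_inj.
move: xy sxy; rewrite eq_sym eq_mulgV1 => /negbTE -> /=.
by rewrite eq_sym eq_mulgV1 => /negbTE -> /= /negb_inj.
Qed.

Lemma conn R : cayley_subset R -> grr_fwd R -> 2 < #|gT| -> <<R>> = [set: gT].
Proof.
move=> [HR R1] G n2; apply/eqP; rewrite eqEsubset subsetT /=.
apply/subsetP => g _; apply/negPn/negP => gH.
have RH : R \subset <<R>> := subset_gen R.
have adjH : forall x y, cay_adj R x y -> (x \in <<R>>) = (y \in <<R>>).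
  move=> x y /(subsetP RH) yx.
  by rewrite -(groupMl x yx) mulgKV.
case: (pickP [pred c in <<R>> | c != 1]) => [c /andP[cH c1] | none].
  pose f x := if x \in <<R>> then x * c else x.
  have finj : injective f.
    move=> x y; rewrite /f; case: ifP => xH; case: ifP => yH.
    - exact: mulIg.
    - by move=> E; move: yH; rewrite -E groupM.
    - by move=> E; move: xH; rewrite E groupM.
    - done.
  pose s := perm finj.
  have aut : cay_aut R s.
    move=> x y; rewrite !permE /f.
    case: ifP => xH; case: ifP => yH.
    - by rewrite /cay_adj invMg mulgA mulgK.
    - have -> : cay_adj R (x * c) y = false by apply/negP => /adjH; rewrite groupM // yH.
      by apply/esym/negP => /adjH; rewrite xH yH.
    - have -> : cay_adj R x (y * c) = false by apply/negP => /adjH; rewrite groupM // xH.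
      by apply/esym/negP => /adjH; rewrite xH yH.
    - done.
  have [h Hh] := G s aut.
  have : g = g * h by rewrite -Hh permE /f (negbTE gH).
  rewrite -{1}[g]mulg1 => /mulgI h1.
  have := Hh 1; rewrite permE /f group1 mul1g -h1 => E.
  by move: c1; rewrite E mulg1 eqxx.
have noadj : forall x y, cay_adj R x y = false.
  move=> x y; apply/negP => xy.
  have := none (y * x^-1); rewrite /= (subsetP RH _ xy) /= => /negbFE /eqP E.
  by rewrite /cay_adj E (negbTE R1) in xy.
case: (pickP [pred a : gT | a != 1]) => [a a1 | h1]; last first.
  have H1 : forall z, z \in [:: (1:gT)].
    by move=> z; rewrite inE; have := h1 z => /= /negbFE.
  by have := leq_trans n2 (small_card _ H1).
case: (pickP [pred b : gT | (b != 1) && (b != a)]) => [b /andP[b1 ba] | h2]; last first.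
  have H2 : forall z, z \in [:: 1; a].
    move=> z; rewrite !inE.
    by case: (eqVneq z 1) => //= z1; have := h2 z; rewrite /= z1 /= => /negbFE.
  by have := leq_trans n2 (small_card _ H2).
have aut : cay_aut R (tperm a b).
  by apply: twins_aut => // z _ _; rewrite !noadj.
have [h Hh] := G _ aut.
have t1' : tperm a b 1 = 1 by rewrite tpermD // eq_sym.
have h1 : h = 1 by have := Hh 1; rewrite t1' mul1g => /esym.
by have := Hh a; rewrite tpermL h1 mulg1 => E; rewrite E eqxx in ba.
Qed.

End Aux.
Arguments grr_fwd {gT}.
Arguments adj_sym {gT}.
Arguments adj_irr {gT}.
Arguments card_nbr {gT}.
Arguments rev_step {gT}.
Arguments twins_aut {gT}.
Arguments small_card {gT}.
Arguments main_contra {gT}.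
Arguments compl_cs {gT}.
Arguments compl_compl {gT}.
Arguments compl_grr {gT}.
Arguments conn {gT}.

Theorem lemma2p2 (gT : finGroupType) (R : {set gT}) :
  cayley_subset R -> is_GRR R ->
  ((#|isolated R R| <= 1)%N \/
   (#|isolated (cay_compl R) (cay_compl R)| <= 1)%N) /\
  ((2 < #|[set: gT]|)%N ->
   (<<R :\: isolated R R>> = [set: gT] /\ (#|isolated R R| <= 1)%N) \/
   (<<cay_compl R :\: isolated (cay_compl R) (cay_compl R)>> = [set: gT] /\
    (#|isolated (cay_compl R) (cay_compl R)| <= 1)%N)).
Proof.
move=> HR HG.
have G : grr_fwd R by move=> s /(HG s).
have R1 : 1 \notin R by case: HR.
have HRc := compl_cs _ HR.
have Gc := compl_grr _ G.
have E : isolated R R = set0 \/ isolated (cay_compl R) (cay_compl R) = set0.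
  case: (set_0Vmem (isolated R R)) => [->|[u Hu]]; first by left.
  case: (set_0Vmem (isolated (cay_compl R) (cay_compl R))) => [->|[v Hv]]; first by right.
  exfalso.
  case uv: (cay_adj R u v); first exact: (main_contra _ _ _ HR G Hu Hv uv).
  have uR : u \in R by move: Hu; rewrite inE => /andP[].
  have vR : v \notin R by move: Hv; rewrite !inE negb_or => /andP[/andP[]].
  have uv1 : u != v by apply: contraNneq vR => <-.
  apply: (main_contra _ _ u HRc Gc Hv); first by rewrite compl_compl.
  rewrite /cay_adj !inE negb_or -eq_mulgV1 uv1 /=.
  by move: uv; rewrite /cay_adj -{1}(proj1 HR) mem_invg invMg invgK => ->.
split.
  by case: E => ->; rewrite cards0; [left|right].
move=> n2; rewrite cardsT in n2.
case: E => ->; [left|right]; rewrite setD0 cards0; split => //.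
  exact: conn.
exact: conn.
Qed.
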